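(* Let $p>1$ and let $A$ be a real $r$-matrix of order $n_1\times\cdots\times n_r$. Then: (a) $\eta^{(p)}(\mathrm{sym}(A))\leq \dfrac{r!}{r^{r/p}}\|A\|_p$; (b) if $A$ is nonnegative, then $\eta^{(p)}(\mathrm{sym}(A))=\dfrac{r!}{r^{r/p}}\|A\|_p$.
   Context: An $r$-matrix of order $n_1\times\cdots\times n_r$ is a function on $[n_1]\times\cdots\times[n_r]$ with values $a_{i_1,\ldots,i_r}$. Symmetrant: let $n=n_1+\cdots+n_r$, partition $[n]$ into consecutive intervals $N_1,\ldots,N_r$ with $|N_k|=n_k$; for $j\in[n]$ let $\sigma(j)$ be the $k$ with $j\in N_k$ and $\theta(j)$ the position of $j$ within $N_{\sigma(j)}$ (in increasing order). Then $\mathrm{sym}(A)$ is the cubical $r$-matrix $B$ of order $n$ with $b_{j_1,\ldots,j_r}=0$ if $\sigma(j_1),\ldots,\sigma(j_r)$ are not all distinct, and otherwise $b_{j_1,\ldots,j_r}=a_{i_1,\ldots,i_r}$ where $i_{\sigma(j_s)}=\theta(j_s)$ for all $s\in[r]$. For a real symmetric cubical $B$ of order $n$, $P_B(\mathbf{x})=\sum b_{j_1,\ldots,j_r}x_{j_1}\cdots x_{j_r}$ and $\eta^{(p)}(B)=\max\{|P_B(\mathbf{x})|:\mathbf{x}\in\mathbb{R}^n,|\mathbf{x}|_p=1\}$. The spectral $p$-norm is $\|A\|_p=\max\{|\sum a_{i_1,\ldots,i_r}\overline{x^{(1)}_{i_1}}\cdots\overline{x^{(r)}_{i_r}}|:\mathbf{x}^{(k)}\in\mathbb{C}^{n_k},\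 |\mathbf{x}^{(k)}|_p=1\ \forall k\}$. *)

(* Defs.v *)
From HB Require Import structures.
From mathcomp Require Import all_boot all_order all_algebra.
From mathcomp Require Import complex.
From mathcomp Require Import boolp classical_sets reals exp.
Set Implicit Arguments. Unset Strict Implicit. Unset Printing Implicit Defensive.
Import Order.TTheory GRing.Theory Num.Theory.
Local Open Scope ring_scope.
Local Open Scope classical_set_scope.

Definition mindex (r : nat) (n : 'I_r -> nat) :=
  {dffun forall k : 'I_r, 'I_(n k)}.

Definition lpnorm (R : realType) (p : R) (I : finType) (x : I -> R) : R :=
  (\sum_(i : I) `|x i| `^ p) `^ p^-1.
Definition lpnormC (R : realType) (p : R) (I : finType) (x : I -> R[i]) : R :=
  (\sum_(i : I) Normc.normc (x i) `^ p) `^ p^-1.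

Definition spnorm (R : realType) (p : R) (r : nat) (n : 'I_r -> nat)
    (A : mindex n -> R) : R :=
  sup [set t : R | exists x : forall k : 'I_r, 'I_(n k) -> R[i],
         (forall k, lpnormC p (x k) = 1) /\
         t = Normc.normc (\sum_(i : mindex n)
                (A i)%:C%C * \prod_(k < r) Num.conj (x k (i k)))].

(* cubical r-matrix of order N: entries b_{j_1..j_r}, j : 'I_r -> 'I_N *)
Definition cform (R : realType) (r N : nat) (B : {ffun 'I_r -> 'I_N} -> R)
    (x : 'I_N -> R) : R :=
  \sum_(j : {ffun 'I_r -> 'I_N}) B j * \prod_(s < r) x (j s).

Definition etaP (R : realType) (p : R) (r N : nat)
    (B : {ffun 'I_r -> 'I_N} -> R) : R :=
  sup [set t : R | exists x : 'I_N -> R, lpnorm p x = 1 /\ t = `|cform B x|].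

Definition ntot (r : nat) (n : 'I_r -> nat) : nat := (\sum_(k < r) n k)%N.
(* first element (0-based) of the interval N_k *)
Definition offs (r : nat) (n : 'I_r -> nat) (k : 'I_r) : nat :=
  (\sum_(l < r | (l < k)%N) n l)%N.
Definition sigma (r : nat) (n : 'I_r -> nat) (j : 'I_(ntot n)) : option 'I_r :=
  [pick k | (offs n k <= j < offs n k + n k)%N].
Definition theta (r : nat) (n : 'I_r -> nat) (j : 'I_(ntot n)) : nat :=
  (j - (if sigma j is Some k then offs n k else 0))%N.

(* b_j = 0 unless the sigma(j_s) are pairwise distinct; otherwise b_j = a_i
   with i_{sigma(j_s)} = theta(j_s) for all s (this i is unique, so the sum
   below has exactly one term). *)
Definition symmetrant (R : realType) (r : nat) (n : 'I_r -> nat) (A : mindex n -> R)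
    (j : {ffun 'I_r -> 'I_(ntot n)}) : R :=
  if [forall s : 'I_r, forall t : 'I_r, (s != t) ==> (sigma (j s) != sigma (j t))]
  then \sum_(i : mindex n |
          [forall s : 'I_r, if sigma (j s) is Some k then
                              (nat_of_ord (i k) == theta (j s)) else false])
         A i
  else 0.

(* Main.v *)
Require Import Defs.
From HB Require Import structures.
From mathcomp Require Import all_boot all_order all_algebra fingroup perm.
From mathcomp Require Import complex zify.
From mathcomp Require Import boolp classical_sets reals exp.
Set Implicit Arguments. Unset Strict Implicit. Unset Printing Implicit Defensive.
Import Order.TTheory GRing.Theory Num.Theory.
Local Open Scope ring_scope.

Section Comb.
Variables (r : nat) (n : 'I_r -> nat).
Local Notation N := (ntot n).

Lemma offs_leS (k : 'I_r) : (\sum_(l < r | (l <= k)%N) n l = offs n k + n k)%N.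
Proof.
rewrite (bigD1 k) //= addnC /offs; congr (_ + _)%N.
by apply: eq_bigl => l; rewrite ltn_neqAle andbC.
Qed.

Lemma sum_le_mono (P Q : pred 'I_r) : (forall l, P l -> Q l) ->
  (\sum_(l < r | P l) n l <= \sum_(l < r | Q l) n l)%N.
Proof.
move=> PQ; rewrite [X in (X <= _)%N]big_mkcond [X in (_ <= X)%N]big_mkcond.
apply: leq_sum => l _; case: ifP => // Pl; by rewrite (PQ _ Pl).
Qed.

Lemma offs_lt (k k' : 'I_r) : (k < k')%N -> (offs n k + n k <= offs n k')%N.
Proof.
move=> kk'; rewrite -offs_leS; apply: sum_le_mono => l lk.
exact: leq_ltn_trans lk kk'.
Qed.

Lemma offs_ntot k : (offs n k + n k <= N)%N.
Proof. by rewrite -offs_leS /ntot; apply: (@sum_le_mono _ xpredT). Qed.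

Lemma gidx_lt k (m : 'I_(n k)) : (offs n k + m < N)%N.
Proof. by apply: leq_trans (offs_ntot k); rewrite ltn_add2l. Qed.

Definition gidx k (m : 'I_(n k)) : 'I_N := Ordinal (gidx_lt m).
Arguments gidx : clear implicits.

Lemma interval_uniq (k k' : 'I_r) (v : nat) :
  (offs n k <= v < offs n k + n k)%N -> (offs n k' <= v < offs n k' + n k')%N -> k = k'.
Proof.
move=> /andP[a1 a2] /andP[b1 b2]; apply/val_inj.
case: (ltngtP k k') => // h.
  by have := offs_lt h; lia.
by have := offs_lt h; lia.
Qed.

Lemma sigmaP (j : 'I_N) k : sigma j = Some k <-> (offs n k <= j < offs n k + n k)%N.
Proof.
rewrite /sigma; case: pickP => [k' Hk'|H].
  by split => [[<-]//|Hk]; rewrite (interval_uniq Hk' Hk).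
by split => // Hk; have := H k; rewrite Hk.
Qed.

Lemma sigma_g k m : sigma (gidx k m) = Some k.
Proof. by apply/sigmaP; rewrite /= leq_addr /= ltn_add2l. Qed.

Lemma theta_g k m : theta (gidx k m) = m.
Proof. by rewrite /theta sigma_g /= addKn. Qed.

Lemma gidx_inj k : injective (@gidx k).
Proof. by move=> m1 m2 /(congr1 val) /= /addnI /val_inj. Qed.

Lemma sigma_some j k : sigma j = Some k -> exists m : 'I_(n k), j = gidx k m /\ (m : nat) = theta j.
Proof.
move=> hs; have /andP[h1 h2] := (sigmaP j k).1 hs.
have hm : (j - offs n k < n k)%N by lia.
exists (Ordinal hm); split; last by rewrite /theta hs.
by apply/val_inj => /=; lia.
Qed.


Variable R : realType.

Definition yof (x : 'I_N -> R) (k : 'I_r) (m : 'I_(n k)) : R := x (gidx k m).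
Arguments yof : clear implicits.
Definition Mform (A : mindex n -> R) (y : forall k, 'I_(n k) -> R) : R :=
  \sum_(i : mindex n) A i * \prod_(k < r) y k (i k).

Lemma split_sum (f : 'I_N -> R) : (forall j, sigma j = None -> f j = 0) ->
  \sum_j f j = \sum_k \sum_(m : 'I_(n k)) f (gidx k m).
Proof.
move=> f0.
transitivity (\sum_k \sum_(j | sigma j == Some k) f j); last first.
  apply: eq_bigr => k _.
  rewrite -(big_imset _ (in2W (@gidx_inj k))) /=.
  apply: eq_bigl => j; apply/eqP/imsetP => [/sigma_some [m [-> _]]|[m _ ->]].
    by exists m.
  exact: sigma_g.
under [RHS]eq_bigr do rewrite big_mkcond.
rewrite [RHS]exchange_big /=; apply: eq_bigr => j _.
rewrite -big_mkcond.
case hs: (sigma j) => [k0|].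
  by rewrite (big_pred1 k0) // => k /=; rewrite eq_sym.
by rewrite big_pred0 // f0.
Qed.


Definition hmap (s : {perm 'I_r}) (i : mindex n) : {ffun 'I_r -> 'I_N} :=
  [ffun t => gidx (s t) (i (s t))].

Lemma sym_hmap (A : mindex n -> R) s i : symmetrant A (hmap s i) = A i.
Proof.
rewrite /symmetrant.
have hsig t : sigma (hmap s i t) = Some (s t) by rewrite ffunE sigma_g.
have -> : [forall t, forall u, (t != u) ==> (sigma (hmap s i t) != sigma (hmap s i u))].
  apply/forallP => t; apply/forallP => u; apply/implyP => tu.
  rewrite !hsig; apply: contra tu => /eqP [] /perm_inj ->; done.
rewrite (big_pred1 i) // => i'.
apply/forallP/eqP => [H|->{i'} t]; last by rewrite hsig ffunE theta_g.
apply/ffunP => k; have := H (s^-1 k)%g.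
rewrite hsig ffunE theta_g permKV => /eqP; apply: val_inj.
Qed.

Lemma prod_hmap (x : 'I_N -> R) s i :
  \prod_(t < r) x (hmap s i t) = \prod_(k < r) yof x k (i k).
Proof.
rewrite [RHS](reindex_inj (@perm_inj _ s)) /=.
by apply: eq_bigr => t _; rewrite ffunE.
Qed.

Lemma sym_support (A : mindex n -> R) j : symmetrant A j != 0 -> exists s i, j = hmap s i.
Proof.
rewrite /symmetrant; case: ifP => [/forallP Hd|]; last by rewrite eqxx.
move=> Hsum.
have [i Hi] : exists i : mindex n, [forall s, if sigma (j s) is Some k then
                              (nat_of_ord (i k) == theta (j s)) else false].
  apply/existsP; apply: contraNT Hsum => /existsPn H.
  by rewrite big_pred0 // => i; apply/negbTE/H.
pose f t := if sigma (j t) is Some k then k else t.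
have hS t : sigma (j t) = Some (f t).
  by have := forallP Hi t; rewrite /f; case: (sigma (j t)).
have finj : injective f.
  move=> t u e; apply/eqP; apply: contraT => tu.
  by have := implyP (forallP (Hd t) u) tu; rewrite !hS e eqxx.
exists (perm finj), i.
apply/ffunP => t; rewrite ffunE permE.
have := forallP Hi t; rewrite hS => /eqP h.
apply/val_inj => /=; rewrite h /theta hS.
have /sigmaP /andP[h1 _] := hS t; lia.
Qed.

Lemma key (A : mindex n -> R) x :
  cform (symmetrant A) x = (r`!)%:R * Mform A (yof x).
Proof.
rewrite /cform.
pose h (q : {perm 'I_r} * mindex n) := hmap q.1 q.2.
have hinj : injective h.
  move=> [s i] [s' i'] /= e.
  have es : s = s'.
    apply/permP => t; have := congr1 (fun f : {ffun 'I_r -> 'I_N} => sigma (f t)) e.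
    by rewrite /= !ffunE !sigma_g => -[].
  subst s'; congr pair; apply/ffunP => k.
  have := congr1 (fun f : {ffun 'I_r -> 'I_N} => theta (f (s^-1 k)%g)) e.
  rewrite /= !ffunE !theta_g permKV; apply: val_inj.
transitivity (\sum_(j in h @: setT) symmetrant A j * \prod_(s < r) x (j s)).
  rewrite [RHS]big_mkcond; apply: eq_bigr => j _; case: ifP => // /negbT hj.
  have [->|nz] := eqVneq (symmetrant A j) 0; first by rewrite mul0r.
  case: (sym_support nz) => s [i ji]; case/imsetP: hj; exists (s,i) => //.
  by rewrite in_setT.
rewrite big_imset /=; last by move=> ? ? _ _; apply: hinj.
under eq_bigr => q _ do rewrite sym_hmap prod_hmap.
rewrite (eq_bigl xpredT) => [|q]; last by rewrite in_setT.
rewrite -(pair_big xpredT xpredT (fun (s : {perm 'I_r}) (i : mindex n) => A i * \prod_(k < r) yof x k (i k))) /=.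
rewrite sumr_const card_Sn mulr_natl.
by [].
Qed.


Local Open Scope classical_set_scope.

Lemma nc (w : R[i]) : `|w| = (Normc.normc w)%:C%C.
Proof. reflexivity. Qed.

Lemma cj (a : R) : Num.conj (a%:C%C) = a%:C%C.
Proof.
apply: conj_Creal; rewrite realE ler0c; case: (lerP 0 a) => // h.
by rewrite lecE /= eqxx ltW.
Qed.

Lemma ncr (a : R) : Normc.normc (a%:C%C) = `|a|.
Proof. by rewrite /= expr0n /= addr0 sqrtr_sqr. Qed.

Lemma normc_ge0 (w : R[i]) : 0 <= Normc.normc w.
Proof. by case: w => a b; rewrite /= sqrtr_ge0. Qed.

Variable p : R.
Hypothesis hp : 1 < p.

Lemma p0 : 0 < p. Proof. exact: lt_trans ltr01 hp. Qed.
Lemma pn0 : p != 0. Proof. by rewrite gt_eqF // p0. Qed.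

Lemma powRpK (S : R) : 0 <= S -> (S `^ p^-1) `^ p = S.
Proof. by move=> S0; rewrite -powRrM mulVf ?pn0 // powRr1. Qed.

Lemma lp1 (I : finType) (f : I -> R) : (forall i, 0 <= f i) ->
  (\sum_i f i) `^ p^-1 = 1 -> \sum_i f i = 1.
Proof.
move=> f0 h; rewrite -(powRpK (sumr_ge0 _ (fun i _ => f0 i))) h.
by rewrite powR1.
Qed.

Lemma lpnormP (I : finType) (x : I -> R) : (lpnorm p x) `^ p = \sum_i `|x i| `^ p.
Proof. by rewrite /lpnorm powRpK // sumr_ge0 // => i _; rewrite powR_ge0. Qed.

Lemma lpnorm_ge0 (I : finType) (x : I -> R) : 0 <= lpnorm p x.
Proof. exact: powR_ge0. Qed.

Lemma powR_le1 (a : R) : 0 <= a -> a `^ p <= 1 -> a <= 1.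
Proof.
move=> a0 h; rewrite leNgt; apply/negP => a1.
have h1 : 1 `^ p < a `^ p.
  by apply: (gt0_ltr_powR p0) => //; rewrite nnegrE ?ler01 // ltW.
by move: h1; rewrite powR1 /= ltNge h.
Qed.

Lemma normc_le1 (I : finType) (w : I -> R[i]) : lpnormC p w = 1 ->
  forall m, Normc.normc (w m) <= 1.
Proof.
move=> h m.
have S1 := lp1 (fun m => powR_ge0 (Normc.normc (w m)) p) h.
apply: powR_le1; first exact: normc_ge0.
rewrite -S1 (bigD1 m) //= lerDl sumr_ge0 // => i _; exact: powR_ge0.
Qed.

Lemma normc_MC_le (A : mindex n -> R) (z : forall k, 'I_(n k) -> R[i]) :
  Normc.normc (\sum_(i : mindex n) (A i)%:C%C * \prod_(k < r) Num.conj (z k (i k)))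
  <= \sum_(i : mindex n) `|A i| * \prod_(k < r) Normc.normc (z k (i k)).
Proof.
rewrite -lecR -nc rmorph_sum.
apply: le_trans (ler_norm_sum _ _ _) _.
apply: ler_sum => i _.
rewrite normrM rmorphM /= normr_prod rmorph_prod nc ncr.
rewrite le_eqVlt; apply/orP; left; apply/eqP; congr (_ * _).
by apply: eq_bigr => k _; rewrite norm_conjC.
Qed.


Lemma sup_ge0' (E : set R) : (forall t, E t -> 0 <= t) -> 0 <= sup E.
Proof.
move=> h; have [[[t Et] ub]|ns] := pselect (has_sup E).
  exact: le_trans (h _ Et) (ub_le_sup ub Et).
by rewrite sup_out.
Qed.

Lemma sup_le' (E : set R) b : (forall t, E t -> t <= b) -> 0 <= b -> sup E <= b.
Proof.
move=> h b0; have [[ne ub]|ns] := pselect (has_sup E).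
  exact: ge_sup.
by rewrite sup_out.
Qed.

Lemma le_sup' (E : set R) b t : (forall t, E t -> t <= b) -> E t -> t <= sup E.
Proof. by move=> h Et; apply: ub_le_sup => //; exists b. Qed.

Definition spset (A : mindex n -> R) := [set t : R | exists x : forall k : 'I_r, 'I_(n k) -> R[i],
         (forall k, lpnormC p (x k) = 1) /\
         t = Normc.normc (\sum_(i : mindex n)
                (A i)%:C%C * \prod_(k < r) Num.conj (x k (i k)))].

Lemma spnormE (A : mindex n -> R) : spnorm p A = sup (spset A).
Proof. by []. Qed.

Lemma spset_bnd (A : mindex n -> R) t : spset A t -> 0 <= t <= \sum_(i : mindex n) `|A i|.
Proof.
move=> [z [hz ->]]; rewrite normc_ge0 /=.
apply: le_trans (normc_MC_le A z) _; apply: ler_sum => i _.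
rewrite -[leRHS]mulr1; apply: ler_wpM2l => //.
apply: prodr_ile1 => k _; rewrite normc_ge0 /=; exact: normc_le1.
Qed.

Lemma spnorm_ge0 (A : mindex n -> R) : 0 <= spnorm p A.
Proof. by apply: sup_ge0' => t /spset_bnd /andP[]. Qed.

Lemma spnorm_ub (A : mindex n -> R) t : spset A t -> t <= spnorm p A.
Proof.
move=> h; apply: (le_sup' (b := \sum_(i : mindex n) `|A i|)) h.
by move=> s /spset_bnd /andP[].
Qed.

Lemma prod_powR (I : finType) (f : I -> R) : (forall i, 0 <= f i) ->
  \prod_i (f i `^ p) = (\prod_i f i) `^ p.
Proof.
move=> f0.
suff [] : 0 <= \prod_i f i /\ \prod_i (f i `^ p) = (\prod_i f i) `^ p by [].
apply: (big_ind2 (fun a b => 0 <= b /\ a = b `^ p)) => //.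
- by split => //; rewrite powR1.
- move=> a1 b1 a2 b2 [h1 ->] [h2 ->]; split; first exact: mulr_ge0.
  by rewrite powRM.
Qed.

Lemma amgm (t : 'I_r -> R) : (0 < r)%N -> (forall k, 0 <= t k) -> \sum_k t k `^ p <= 1 ->
  \prod_k t k * r%:R `^ (r%:R / p) <= 1.
Proof.
move=> hr t0 hs.
have r0 : 0 < r%:R :> R by rewrite ltr0n.
apply: powR_le1; first by rewrite mulr_ge0 ?prodr_ge0 ?powR_ge0.
rewrite powRM ?prodr_ge0 ?powR_ge0 // -prod_powR //.
rewrite -powRrM mulfVK ?pn0 // powR_mulrn ?(ltW r0) //.
have := leif_AGM (A := predT) (E := fun k : 'I_r => t k `^ p) (fun i _ => powR_ge0 _ _).
move=> [hle _].
rewrite !cardT /= size_enum_ord in hle.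
have e1 : \prod_(i in predT) t i `^ p = \prod_i t i `^ p by apply: eq_bigl.
have e2 : \sum_(i in predT) t i `^ p = \sum_i t i `^ p by apply: eq_bigl.
rewrite e1 e2 in hle.
have h2 : ((\sum_i t i `^ p) / r%:R) ^+ r <= (r%:R^-1) ^+ r.
  apply: lerXn2r; rewrite ?nnegrE ?divr_ge0 ?sumr_ge0 ?invr_ge0 ?(ltW r0) //.
    by move=> i _; rewrite powR_ge0.
  by rewrite ler_pdivrMr // mulVf ?mul1r // gt_eqF.
apply: le_trans (ler_wpM2r _ (le_trans hle h2)) _.
  by rewrite exprn_ge0 // ltW.
by rewrite -exprMn mulVf ?expr1n // gt_eqF.
Qed.

Lemma tsum (x : 'I_N -> R) : lpnorm p x = 1 ->
  \sum_(k < r) (lpnorm p (yof x k)) `^ p <= 1.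
Proof.
move=> hx.
have S1 := lp1 (fun j => powR_ge0 `|x j| p) hx.
under eq_bigr do rewrite lpnormP.
pose f j := if sigma j is Some _ then `|x j| `^ p else 0.
have -> : \sum_(k < r) \sum_(m : 'I_(n k)) `|yof x k m| `^ p = \sum_j f j.
  rewrite (split_sum (f := f)) => [|j hj]; last by rewrite /f hj.
  by apply: eq_bigr => k _; apply: eq_bigr => m _; rewrite /f /yof sigma_g.
rewrite -S1; apply: ler_sum => j _; rewrite /f; case: (sigma j) => //.
exact: powR_ge0.
Qed.

Lemma powRV' (t : R) : 0 < t -> (t^-1) `^ p = (t `^ p)^-1.
Proof.
move=> t0.
have tp : t `^ p != 0 by rewrite gt_eqF // powR_gt0.
rewrite -[LHS]mulr1 -(mulfV tp) mulrA -powRM ?invr_ge0 ?ltW //.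
by rewrite mulVf ?gt_eqF // powR1 mul1r.
Qed.

Lemma Mbound (A : mindex n -> R) (y : forall k, 'I_(n k) -> R) :
  `|Mform A y| <= spnorm p A * \prod_(k < r) lpnorm p (y k).
Proof.
pose t k := lpnorm p (y k).
have t0 k : 0 <= t k by exact: lpnorm_ge0.
have [[k tk0]|tpos] := pselect (exists k, t k = 0).
  have yk0 m : y k m = 0.
    have hs : \sum_m `|y k m| `^ p = 0 by rewrite -lpnormP -/(t k) tk0 powR0 ?pn0.
    have := @psumr_eq0P _ _ _ _ (fun i _ => powR_ge0 `|y k i| p) hs m isT.
    by move/powR_eq0_eq0/normr0_eq0.
  have -> : Mform A y = 0.
    by rewrite /Mform big1 // => i _; rewrite (bigD1 k) //= yk0 mul0r mulr0.
  rewrite normr0; apply: mulr_ge0; first exact: spnorm_ge0.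
  by apply: prodr_ge0 => i _; exact: t0.
have tp k : 0 < t k.
  by rewrite lt_def t0 andbT; apply/eqP => h; apply: tpos; exists k.
pose z k (m : 'I_(n k)) := ((y k m) / t k)%:C%C.
have hz k : lpnormC p (z k) = 1.
  rewrite /lpnormC.
  under eq_bigr do rewrite /z ncr normrM normfV (ger0_norm (t0 k)) powRM ?invr_ge0 ?t0 // powRV' //.
  by rewrite -mulr_suml -(lpnormP (y k)) mulfV ?powR1 // gt_eqF // powR_gt0 // (tp k).
have e : \sum_(i : mindex n) (A i)%:C%C * \prod_(k < r) Num.conj (z k (i k)) =
   (Mform A y / \prod_(k < r) t k)%:C%C.
  rewrite /Mform mulr_suml rmorph_sum; apply: eq_bigr => i _.
  rewrite -mulrA rmorphM /=; congr (_ * _).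
  rewrite -prodf_div rmorph_prod; apply: eq_bigr => kk _.
  by rewrite /z cj.
have hle := spnorm_ub (ex_intro _ z (conj hz (erefl _))) : _ <= spnorm p A.
have Pp : 0 < \prod_(k < r) t k by rewrite prodr_gt0.
rewrite e ncr normrM normfV (ger0_norm (ltW Pp)) in hle.
by rewrite -ler_pdivrMr.
Qed.


Lemma part_a_core (hr : (0 < r)%N) (A : mindex n -> R) x : lpnorm p x = 1 ->
  `|cform (symmetrant A) x| <= (r`!)%:R / (r%:R `^ (r%:R / p)) * spnorm p A.
Proof.
move=> hx.
rewrite key normrM ger0_norm ?ler0n //.
set Rp := r%:R `^ (r%:R / p).
have Rp0 : 0 < Rp by rewrite powR_gt0 // ltr0n.
apply: le_trans (ler_wpM2l (ler0n _ _) (Mbound A (yof x))) _.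
have hP : \prod_(k < r) lpnorm p (yof x k) <= Rp^-1.
  rewrite -[Rp^-1]mul1r ler_pdivlMr //.
  by apply: amgm => [//|k|]; [exact: lpnorm_ge0|exact: tsum].
rewrite mulrAC -mulrA; apply: ler_wpM2l => //.
by apply: ler_wpM2l => //; exact: spnorm_ge0.
Qed.

Lemma part_a (hr : (0 < r)%N) (A : mindex n -> R) :
  etaP p (symmetrant A) <= (r`!)%:R / (r%:R `^ (r%:R / p)) * spnorm p A.
Proof.
apply: sup_le' => [t [x [hx ->]]|]; first exact: part_a_core.
apply: mulr_ge0; last exact: spnorm_ge0.
by rewrite divr_ge0 ?powR_ge0.
Qed.


Lemma part_b_core (hr : (0 < r)%N) (A : mindex n -> R) (A0 : forall i, 0 <= A i) t :
  spset A t -> exists x, lpnorm p x = 1 /\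
    (r`!)%:R / (r%:R `^ (r%:R / p)) * t <= `|cform (symmetrant A) x|.
Proof.
move=> [z [hz ->]].
set Rp := r%:R `^ (r%:R / p).
have r0 : 0 < r%:R :> R by rewrite ltr0n.
have Rp0 : 0 < Rp by rewrite powR_gt0.
pose w k (m : 'I_(n k)) := Normc.normc (z k m).
pose rho := r%:R `^ (- p^-1) : R.
have rho0 : 0 <= rho by exact: powR_ge0.
pose x (j : 'I_N) := if sigma j is Some k then
   (if insub (theta j) is Some m then rho * w k m else 0) else 0.
have xg k m : x (gidx k m) = rho * w k m.
  by rewrite /x sigma_g theta_g valK.
have hw k : \sum_(m : 'I_(n k)) w k m `^ p = 1.
  exact: (lp1 (fun m => powR_ge0 _ _) (hz k)).
have rhop : rho `^ p = r%:R^-1.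
  by rewrite -powRrM mulNr mulVf ?pn0 // powR_inv1 // ltW.
exists x; split.
  rewrite /lpnorm (split_sum (f := fun j => `|x j| `^ p)) => [|j hj]; last first.
    by rewrite /x hj normr0 powR0 // pn0.
  under eq_bigr => k _ do under eq_bigr => m _ do
    rewrite xg normrM (ger0_norm rho0) (ger0_norm (normc_ge0 _)) powRM ?normc_ge0 //.
  under eq_bigr => k _ do rewrite -mulr_sumr hw mulr1 rhop.
  by rewrite sumr_const card_ord -(mulr_natl (r%:R^-1) r) mulfV ?gt_eqF // powR1.
rewrite key.
have My : Mform A (yof x) = Rp^-1 * Mform A w.
  rewrite /Mform mulr_sumr; apply: eq_bigr => i _.
  rewrite mulrCA; congr (_ * _).
  under eq_bigr => k _ do rewrite /yof xg.
  rewrite prodrMl card_ord; congr (_ * _).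
  rewrite -powR_mulrn // -powRrM /Rp -powRN; congr (_ `^ _).
  by rewrite mulNr mulrC.
rewrite My ger0_norm; last first.
  apply: mulr_ge0 => //; apply: mulr_ge0; first by rewrite invr_ge0 ltW.
  by apply: sumr_ge0 => i _; apply: mulr_ge0 => //; apply: prodr_ge0 => k _; exact: normc_ge0.
rewrite mulrA; apply: ler_wpM2l; first by apply: divr_ge0; [exact: ler0n|exact: ltW].
apply: le_trans (normc_MC_le A z) _.
by apply: ler_sum => i _; rewrite ger0_norm.
Qed.


Lemma part_b (hr : (0 < r)%N) (A : mindex n -> R) (A0 : forall i, 0 <= A i) :
  (r`!)%:R / (r%:R `^ (r%:R / p)) * spnorm p A <= etaP p (symmetrant A).
Proof.
set c := (r`!)%:R / (r%:R `^ (r%:R / p)).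
have c0 : 0 < c by rewrite divr_gt0 ?ltr0n ?fact_gt0 // powR_gt0 // ltr0n.
have eta0 : 0 <= etaP p (symmetrant A).
  by apply: sup_ge0' => s [x [_ ->]].
rewrite mulrC -ler_pdivlMr //.
apply: sup_le' => [t ht|]; last by rewrite divr_ge0 // ltW.
rewrite ler_pdivlMr // mulrC.
have [x [hx hle]] := part_b_core hr A0 ht.
apply: le_trans hle _.
apply: (le_sup' (b := c * spnorm p A)) => [s [y [hy ->]]|]; first exact: part_a_core.
by exists x.
Qed.

End Comb.

Theorem theorem16 (R : realType) (r : nat) (n : 'I_r -> nat) (p : R)
    (hp : 1 < p) (hr : (0 < r)%N) (A : mindex n -> R) :
  etaP p (symmetrant A) <= (r`!)%:R / (r%:R `^ (r%:R / p)) * spnorm p A /\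
  ((forall i, 0 <= A i) ->
     etaP p (symmetrant A) = (r`!)%:R / (r%:R `^ (r%:R / p)) * spnorm p A).
Proof.
split; first exact: part_a.
move=> A0; apply/eqP; rewrite eq_le part_a //=.
exact: part_b.
Qed.
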